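(* Let $X^{(n)}=\{X_1,\dots,X_n\}\subset\mathbb{R}^d$ and $u^{(n)}=\{u_1,\dots,u_n\}\subset\mathbb{R}^d$. Fix $i\in\{1,\dots,n\}$ and $\ell\in\{1,\dots,n\}$, let $v_{u_i}\in\arg\min_{v\in\mathcal{S}^{d-1}}\frac1n\sum_{j=1}^n\mathbf{1}(\langle v,u_j-u_i\rangle\geq0)$, and for $k\in\mathbb{N}$ let $X_k^{(n,\ell)}=\{X_1,\dots,X_{n-\ell},v_1^{(k)},\dots,v_\ell^{(k)}\}$ with $\{v_1^{(k)},\dots,v_\ell^{(k)}\}\subset kv_{u_i}+\mathbb{B}$. If $\mathrm{TD}(u_i;u^{(n)})<\ell/n$, then $$\lim_{k\to\infty}\|\hat T_{X_k^{(n,\ell)}}(u_i)\|=\infty.$$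
   Context: $\mathbb{B}=\{x:\|x\|\leq1\}$. For a set $Z^{(n)}$ of $n$ points, $\hat T_{Z^{(n)}}$ denotes any bijection $T:u^{(n)}\to Z^{(n)}$ minimizing $\frac1n\sum_{j}\|T(u_j)-u_j\|^2$. $\mathrm{TD}(u;u^{(n)})=\min_{v\in\mathcal{S}^{d-1}}\frac1n\sum_j\mathbf{1}(\langle v,u_j-u\rangle\geq0)$. *)

(* Defs.v *)
From HB Require Import structures.
From mathcomp Require Import all_boot all_order all_algebra all_fingroup.
From mathcomp Require Import all_classical all_reals all_analysis.
Set Implicit Arguments. Unset Strict Implicit. Unset Printing Implicit Defensive.
Import Order.TTheory GRing.Theory Num.Theory.
Local Open Scope ring_scope.
Local Open Scope classical_set_scope.

Definition edot (R : realType) (d : nat) (x y : 'rV[R]_d) : R :=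
  \sum_(m < d) x ord0 m * y ord0 m.

Definition enorm (R : realType) (d : nat) (x : 'rV[R]_d) : R :=
  Num.sqrt (edot x x).

Definition sphere (R : realType) (d : nat) : set 'rV[R]_d :=
  [set v | enorm v = 1].
Arguments sphere : clear implicits.

Definition ball1 (R : realType) (d : nat) : set 'rV[R]_d :=
  [set x | enorm x <= 1].
Arguments ball1 : clear implicits.

Definition depth_dir (R : realType) (d n : nat) (u : 'I_n -> 'rV[R]_d)
  (z : 'rV[R]_d) (v : 'rV[R]_d) : R :=
  (n%:R)^-1 * (#|[set j : 'I_n | 0 <= edot v (u j - z)]|)%:R.

(* Tukey depth TD(z; u^(n)) = min over v in S^{d-1}; stated as the infimum
   (the set of values is finite, so the inf is attained when d >= 1). *)
Definition TD (R : realType) (d n : nat) (z : 'rV[R]_d) (u : 'I_n -> 'rV[R]_d) : R :=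
  inf [set depth_dir u z v | v in sphere R d].

Definition tcost (R : realType) (d n : nat) (u Z : 'I_n -> 'rV[R]_d)
  (s : 'S_n) : R :=
  (n%:R)^-1 * \sum_(j < n) enorm (Z (s j) - u j) ^+ 2.

(* s is an optimal bijection u^(n) -> Z^(n), i.e. defines \hat T_Z *)
Definition optimal_map (R : realType) (d n : nat) (u Z : 'I_n -> 'rV[R]_d)
  (s : 'S_n) : Prop :=
  forall t : 'S_n, tcost u Z s <= tcost u Z t.

(* X_k^(n,l) = {X_1, ..., X_{n-l}, v_1^(k), ..., v_l^(k)} as an indexed family *)
Definition contaminated (R : realType) (d n l : nat) (X : 'I_n -> 'rV[R]_d)
  (w : 'I_l -> 'rV[R]_d) : 'I_n -> 'rV[R]_d :=
  fun j => match (j - (n - l) < l)%N =P true with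
           | ReflectT h => if (j < n - l)%N then X j else w (Ordinal h)
           | ReflectF _ => X j
           end.

(* Main.v *)
Require Import Defs.
From HB Require Import structures.
From mathcomp Require Import all_boot all_order all_algebra all_fingroup.
From mathcomp Require Import all_classical all_reals all_analysis.
From mathcomp Require Import ring lra zify.
From Stdlib Require Import Lia.
Import Order.TTheory GRing.Theory Num.Theory.
Local Open Scope ring_scope.
Local Open Scope classical_set_scope.

Section E.
Context {R : realType} {d : nat}.
Implicit Types x y z : 'rV[R]_d.

Lemma edotC x y : edot x y = edot y x.
Proof. by apply: eq_bigr => m _; rewrite mulrC. Qed.

Lemma edotDl x y z : edot (x + y) z = edot x z + edot y z.
Proof. by rewrite /edot -big_split; apply: eq_bigr => m _; rewrite mxE mulrDl. Qed.

Lemma edotNl x z : edot (- x) z = - edot x z.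
Proof. by rewrite /edot -sumrN; apply: eq_bigr => m _; rewrite mxE mulNr. Qed.

Lemma edotBl x y z : edot (x - y) z = edot x z - edot y z.
Proof. by rewrite edotDl edotNl. Qed.

Lemma edotZl (a : R) x z : edot (a *: x) z = a * edot x z.
Proof. by rewrite /edot mulr_sumr; apply: eq_bigr => m _; rewrite mxE mulrA. Qed.

Lemma edotDr x y z : edot z (x + y) = edot z x + edot z y.
Proof. by rewrite !(edotC z) edotDl. Qed.
Lemma edotBr x y z : edot z (x - y) = edot z x - edot z y.
Proof. by rewrite !(edotC z) edotBl. Qed.
Lemma edotZr (a : R) x z : edot z (a *: x) = a * edot z x.
Proof. by rewrite !(edotC z) edotZl. Qed.
Lemma edot0r x : edot x 0 = 0.
Proof. by rewrite /edot big1 // => m _; rewrite mxE mulr0. Qed.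

Lemma edot_ge0 x : 0 <= edot x x.
Proof. by apply: sumr_ge0 => m _; rewrite -expr2 sqr_ge0. Qed.

Lemma enorm_ge0 x : 0 <= enorm x.
Proof. exact: sqrtr_ge0. Qed.

Lemma enorm_sq x : enorm x ^+ 2 = edot x x.
Proof. by rewrite /enorm sqr_sqrtr // edot_ge0. Qed.

Lemma quad x y (t : R) : 0 <= edot x x - 2 * t * edot x y + t ^+ 2 * edot y y.
Proof.
have := edot_ge0 (x - t *: y).
rewrite !(edotBl, edotBr, edotZl, edotZr) (edotC y x).
move=> h; apply: le_trans h _; rewrite le_eqVlt; apply/orP; left; apply/eqP.
ring.
Qed.

Lemma CS2 x y : edot x y ^+ 2 <= edot x x * edot y y.
Proof.
have hy := edot_ge0 y; have hx := edot_ge0 x.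
have [y0|ypos] := eqVneq (edot y y) 0.
  have [xy0|xyn] := eqVneq (edot x y) 0.
    by rewrite xy0 y0 expr0n /= mulr0.
  have := quad x y ((edot x x + 1) / (2 * edot x y)).
  have -> : edot x x - 2 * ((edot x x + 1) / (2 * edot x y)) * edot x y = -1.
    by field; rewrite xyn.
  rewrite y0 mulr0 addr0; lra.
have yp : 0 < edot y y by rewrite lt_neqAle eq_sym ypos.
have := quad x y (edot x y / edot y y).
set a := edot x y; set b := edot y y; set c := edot x x => h.
have e : c - 2 * (a / b) * a + (a / b) ^+ 2 * b = (c * b - a ^+ 2) / b.
  by field; rewrite gt_eqF.
rewrite e in h.
have : 0 <= c * b - a ^+ 2.
  by move: h; rewrite pmulr_lge0 // invr_gt0.
lra.
Qed.

Lemma CS x y : `|edot x y| <= enorm x * enorm y.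
Proof.
rewrite -ler_sqr ?nnegrE ?normr_ge0 ?mulr_ge0 ?enorm_ge0 //.
by rewrite real_normK ?num_real // exprMn !enorm_sq CS2.
Qed.

Lemma edotxx_unit x : enorm x = 1 -> edot x x = 1.
Proof. by move=> h; rewrite -enorm_sq h expr1n. Qed.

End E.


Lemma sum2 (R : realType) {n} (F : 'I_n -> R) i j : i != j ->
  \sum_k F k = F i + F j + \sum_(k | (k != i) && (k != j)) F k.
Proof.
move=> hij; rewrite (bigD1 i) //= (bigD1 j) /=; last by rewrite eq_sym.
by rewrite addrA; congr (_ + _); apply: eq_bigl => k; rewrite andbC.
Qed.

Lemma swap_ineq (R : realType) (d n : nat) (u Z : 'I_n -> 'rV[R]_d) (s : 'S_n)
  (i j : 'I_n) : optimal_map u Z s -> i != j ->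
  0 <= edot (Z (s j) - Z (s i)) (u j - u i).
Proof.
move=> hopt hij.
have := hopt (tperm i j * s)%g.
rewrite /tcost.
have n0 : (0 < n)%N by case: n i {u Z s hopt j hij} => [[]|].
rewrite ler_pM2l ?invr_gt0 ?ltr0n //.
rewrite !(@sum2 _ _ _ i j hij) /=.
rewrite !permM tpermL tpermR.
set S1 := \sum_(k | _) _. set S2 := \sum_(k | _) _.
have -> : S2 = S1.
  apply: eq_bigr => k /andP[ki kj]; by rewrite permM tpermD // eq_sym.
rewrite !enorm_sq !(edotBl, edotBr) !(@edotC _ _ (u _) (Z _)).
try rewrite (@edotC _ _ (Z (s i)) (Z (s j))); try rewrite (@edotC _ _ (u i) (u j)).
lra.
Qed.


Lemma contam_lo (R : realType) (d n l : nat) (X : 'I_n -> 'rV[R]_d) (w : 'I_l -> 'rV[R]_d) (j : 'I_n) :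
  (j < n - l)%N -> contaminated X w j = X j.
Proof. by rewrite /contaminated => hj; case: eqP => // h; rewrite hj. Qed.

Lemma contam_hi (R : realType) (d n l : nat) (X : 'I_n -> 'rV[R]_d) (w : 'I_l -> 'rV[R]_d) (j : 'I_n) :
  (l <= n)%N -> (n - l <= j)%N -> exists m, contaminated X w j = w m.
Proof.
move=> hln hj; rewrite /contaminated; case: eqP => h.
  by rewrite ltnNge hj /=; eexists.
exfalso; apply: h; have := ltn_ord j; move: hj hln; clear; lia.
Qed.

Lemma core_bound (R : realType) (d : nat) (k : R) (vui w x a : 'rV[R]_d) (MX : R) :
  enorm vui = 1 -> enorm (w - k *: vui) <= 1 -> enorm x <= MX ->
  0 <= edot (w - x) a -> k * (- edot vui a) <= enorm a * (1 + MX).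
Proof.
move=> hv he hx h.
have ew : w = (w - k *: vui) + k *: vui by rewrite subrK.
rewrite ew edotBl edotDl edotZl in h.
have h1 := CS (w - k *: vui) a.
have h2 := CS x a.
have ha := enorm_ge0 a.
have h3 : enorm (w - k *: vui) * enorm a <= enorm a by rewrite ler_piMl.
have h4 : enorm x * enorm a <= MX * enorm a by rewrite ler_wpM2r.
have := ler_norm (edot (w - k *: vui) a).
have := ler_norm (- edot x a); rewrite normrN mulrN.
lra.
Qed.

Lemma lower_bound (R : realType) (d : nat) (k : R) (vui w : 'rV[R]_d) :
  enorm vui = 1 -> enorm (w - k *: vui) <= 1 -> k - 1 <= enorm w.
Proof.
move=> hv he.
have ew : w = (w - k *: vui) + k *: vui by rewrite subrK.
have e1 : edot w vui = edot (w - k *: vui) vui + k.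
  by rewrite {1}ew edotDl edotZl (edotxx_unit _ hv) mulr1.
have h1 := CS (w - k *: vui) vui.
have h2 := CS w vui.
rewrite hv mulr1 in h1 h2.
have := ler_norm (edot w vui).
have := ler_norm (- edot (w - k *: vui) vui); rewrite normrN.
lra.
Qed.


Theorem mainTheorem9 (R : realType) (d n : nat)
  (X u : 'I_n -> 'rV[R]_d) (i : 'I_n) (l : nat)
  (hl1 : (1 <= l)%N) (hln : (l <= n)%N)
  (vui : 'rV[R]_d)
  (hvui_unit : vui \in sphere R d)
  (hvui_min : forall w, w \in sphere R d -> depth_dir u (u i) vui <= depth_dir u (u i) w)
  (vk : nat -> 'I_l -> 'rV[R]_d)
  (hvk : forall (k : nat) (m : 'I_l), (vk k m - k%:R *: vui) \in ball1 R d)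
  (T : nat -> 'S_n)
  (hT : forall k : nat, optimal_map u (contaminated X (vk k)) (T k))
  (hTD : TD (u i) u < l%:R / n%:R) :
  (fun k : nat => enorm (contaminated X (vk k) (T k i))) @ \oo --> +oo.
Proof.
have hv : enorm vui = 1 by have := set_mem hvui_unit.
pose c j := edot vui (u j - u i).
pose MX := \sum_m enorm (X m).
have MX0 : 0 <= MX by apply: sumr_ge0 => *; exact: enorm_ge0.
have hMX : forall m, enorm (X m) <= MX.
  move=> m; rewrite /MX (bigD1 m) //= lerDl; apply: sumr_ge0 => *; exact: enorm_ge0.
pose g j := if c j < 0 then enorm (u j - u i) * (1 + MX) / (- c j) else 0.
pose B := \sum_j g j.
have g0 : forall j, 0 <= g j.
  move=> j; rewrite /g; case: ifP => // h.
  apply: divr_ge0; last by rewrite oppr_ge0 ltW.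
  apply: mulr_ge0; [exact: enorm_ge0 | lra].
have hB : forall j, g j <= B.
  by move=> j; rewrite /B (bigD1 j) //= lerDl; apply: sumr_ge0 => *; exact: g0.
have hdep : depth_dir u (u i) vui < l%:R / n%:R.
  apply: le_lt_trans hTD; rewrite /TD; apply: lb_le_inf.
    by exists (depth_dir u (u i) vui); exists vui => //; exact: set_mem.
  by move=> y [w hw <-]; apply: hvui_min; exact: mem_set.
have key : forall k, B < k%:R -> (n - l <= T k i)%N.
  move=> k hk; rewrite leqNgt; apply/negP => hlt.
  set s := T k in hlt *.
  have hf : forall m : 'I_l, (n - l + m < n)%N by move=> m; have := ltn_ord m; lia.
  pose f := fun m : 'I_l => (s^-1)%g (Ordinal (hf m)).
  have hsf : forall m, s (f m) = Ordinal (hf m) by move=> m; rewrite /f permKV.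
  have hc : forall m, 0 <= c (f m).
    move=> m; rewrite leNgt; apply/negP => hneg.
    have hji : i != f m.
      by apply/eqP => e; move: hlt; rewrite e hsf /=; lia.
    have hsw := @swap_ineq _ _ _ _ _ _ _ _ (hT k) hji.
    rewrite (@contam_lo _ _ _ _ _ _ _ hlt) in hsw.
    have hj : (n - l <= s (f m))%N by rewrite hsf /= leq_addr.
    have [m' hm'] := @contam_hi _ _ _ _ X (vk k) _ hln hj.
    rewrite hm' in hsw.
    have hcb := @core_bound _ _ _ _ _ _ _ _ hv (set_mem (hvk k m')) (hMX (s i)) hsw.
    have hg := hB (f m); rewrite /g hneg in hg.
    have : k%:R <= enorm (u (f m) - u i) * (1 + MX) / (- c (f m)).
      by rewrite ler_pdivlMr ?oppr_gt0.
    lra.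
  have hsub : (f @: [set: 'I_l]%SET) \subset [set j : 'I_n | 0 <= edot vui (u j - u i)].
    by apply/fintype.subsetP => j /finset.imsetP [m _ ->]; apply: mem_set; exact: hc m.
  have hinj : injective f.
    move=> a b /(congr1 s); rewrite !hsf => /(congr1 val) /= e.
    apply: val_inj => /=; lia.
  have hcard := subset_leq_card hsub.
  rewrite card_imset // cardsT card_ord in hcard.
  have : l%:R / n%:R <= depth_dir u (u i) vui.
    rewrite /depth_dir mulrC; apply: ler_wpM2l; first by rewrite invr_ge0 ler0n.
    by rewrite ler_nat.
  by move/(lt_le_trans hdep); rewrite ltxx.
apply/cvgryPge => A.
have hN := truncnS_gt (`|B| + `|A| + 1).
near=> k.
have hk : ((Num.truncn (`|B| + `|A| + 1)).+1 <= k)%N by near: k; exact: nbhs_infty_ge.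
have hkR : (Num.truncn (`|B| + `|A| + 1)).+1%:R <= k%:R :> R by rewrite ler_nat.
have hBk : B < k%:R by have := ler_norm B; have := normr_ge0 A; lra.
have hi := key k hBk.
have [m hm] := @contam_hi _ _ _ _ X (vk k) _ hln hi.
rewrite hm; have := @lower_bound _ _ _ _ _ hv (set_mem (hvk k m)); have := ler_norm A.
have := normr_ge0 B; lra.
Unshelve. all: end_near.
Qed.
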